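(* Let $a>0$ and let $\mathcal{G}$ be the real Lie algebra with basis $X_1,X_2,X_3$ and brackets $[X_1,X_2]=-aX_2+X_3$, $[X_2,X_3]=0$, $[X_3,X_1]=X_2+aX_3$ (Bianchi type $VII_a$). Every real Manin triple $(\mathcal{D},\mathcal{G}',\tilde{\mathcal{G}}')$ with $\mathcal{G}'\cong\mathcal{G}$ is isomorphic to exactly one Manin triple $(\mathcal{D},\mathcal{G},\tilde{\mathcal{G}})$ in which $\tilde{\mathcal{G}}$, in the basis $\tilde X^1,\tilde X^2,\tilde X^3$ dual to $X_1,X_2,X_3$, has one of the following bracket structures: (a) (Bianchi $I$) all brackets zero; (b) (Bianchi $II$) (i) $[\tilde X^1,\tilde X^2]=0$, $[\tilde X^2,\tilde X^3]=\tilde X^1$, $[\tilde X^3,\tilde X^1]=0$; (ii) $[\tilde X^1,\tilde X^2]=0$, $[\tilde X^2,\tilde X^3]=-\tilde X^1$, $[\tilde X^3,\tilde X^1]=0$; (c) (Bianchi $VII_{1/a}$) $[\tilde X^1,\tilde X^2]=b(-\tfrac1a\tilde X^2+\tilde X^3)$, $[\tilde X^2,\tilde X^3]=0$, $[\tilde X^3,\tilde X^1]=b(\tilde X^2+\tfrac1a\tilde X^3)$, with $b\in\mathbb{R}\setminus\{0\}$.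
   Context: A real Manin triple $(\mathcal{D},\mathcal{G},\tilde{\mathcal{G}})$ consists of a real Lie algebra $\mathcal{D}$ with a symmetric, ad-invariant, nondegenerate bilinear form $\langle\cdot,\cdot\rangle$, and two maximally isotropic Lie subalgebras $\mathcal{G},\tilde{\mathcal{G}}$ with $\mathcal{D}=\mathcal{G}\oplus\tilde{\mathcal{G}}$ as vector spaces; here $\dim\mathcal{D}=6$, $\dim\mathcal{G}=\dim\tilde{\mathcal{G}}=3$. Bases $X_i$ of $\mathcal{G}$ and $\tilde X^i$ of $\tilde{\mathcal{G}}$ are dual if $\langle X_i,X_j\rangle=0$, $\langle X_i,\tilde X^j\rangle=\delta_i^j$, $\langle\tilde X^i,\tilde X^j\rangle=0$. If $[X_i,X_j]=f_{ij}{}^kX_k$ and $[\tilde X^i,\tilde X^j]=\tilde f^{ij}{}_k\tilde X^k$, ad-invariance forces $[X_i,\tilde X^j]=f_{ki}{}^j\tilde X^k+\tilde f^{jk}{}_iX_k$, so the triple is determined by the brackets of $\mathcal{G}$ and $\tilde{\mathcal{G}}$ in dual bases. Two Manin triples are isomorphic if there is a Lie algebra isomorphism of the doubles preserving the bilinear forms and mapping first subalgebra to first subalgebra and second to second; equivalently, they are related by a change of basis $X_i'=X_kA^k{}_i$, $\tilde X'^j=(A^{-1})^j{}_k\tilde X^k$. Different values of the parameter $b$ give non-isomorphic triples. *)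

(* Defs.v *)
From HB Require Import structures.
From mathcomp Require Import all_boot all_order all_algebra.
From mathcomp Require Import reals.
Set Implicit Arguments. Unset Strict Implicit. Unset Printing Implicit Defensive.
Import Order.TTheory GRing.Theory Num.Theory.
Local Open Scope ring_scope.

Section Defs.
Variable R : realType.

(* Structure constants of a 3-dim algebra: [e_i, e_j] = \sum_k sc i j k e_k. *)
Definition strconst := 'I_3 -> 'I_3 -> 'I_3 -> R.

Definition vec3 (x y z : R) : 'I_3 -> R := fun k => nth 0 [:: x; y; z] k.

(* structure constants from [e1,e2] = c12, [e2,e3] = c23, [e3,e1] = c31
   (indices 0,1,2 stand for 1,2,3) *)
Definition sc_of (c12 c23 c31 : 'I_3 -> R) : strconst :=
  fun i j k =>
    match nat_of_ord i, nat_of_ord j with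
    | 0%N, 1%N => c12 k
    | 1%N, 0%N => - c12 k
    | 1%N, 2%N => c23 k
    | 2%N, 1%N => - c23 k
    | 2%N, 0%N => c31 k
    | 0%N, 2%N => - c31 k
    | _, _ => 0
    end.

(* Structure constants of the double D = G (+) G~ in the basis
   (X_1,X_2,X_3, X~^1,X~^2,X~^3) (inl i = X_i, inr i = X~^i), with
   [X_i,X_j] = f_ij^k X_k, [X~^i,X~^j] = ft^ij_k X~^k,
   [X_i,X~^j] = f_ki^j X~^k + ft^jk_i X_k  (forced by ad-invariance of the
   canonical pairing <X_i,X~^j> = delta_i^j). *)
Definition double_sc (f ft : strconst) :
    'I_3 + 'I_3 -> 'I_3 + 'I_3 -> 'I_3 + 'I_3 -> R :=
  fun a b c =>
    match a, b, c with
    | inl i, inl j, inl k => f i j k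
    | inl _, inl _, inr _ => 0
    | inr i, inr j, inr k => ft i j k
    | inr _, inr _, inl _ => 0
    | inl i, inr j, inl k => ft j k i
    | inl i, inr j, inr k => f k i j
    | inr j, inl i, inl k => - ft j k i
    | inr j, inl i, inr k => - f k i j
    end.

(* A real Manin triple given by dual bases: the double is a Lie algebra
   (antisymmetry + Jacobi identity). The subspaces G, G~ are then
   maximally isotropic Lie subalgebras for the canonical pairing, which is
   symmetric, nondegenerate and (by construction of the bracket) ad-invariant. *)
Definition manin_triple (f ft : strconst) : Prop :=
  (forall a b c, double_sc f ft a b c = - double_sc f ft b a c) /\
  (forall a b c e,
     \sum_(d : 'I_3 + 'I_3)
       (double_sc f ft a b d * double_sc f ft d c e
      + double_sc f ft b c d * double_sc f ft d a e
      + double_sc f ft c a d * double_sc f ft d b e) = 0).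

(* change of basis X'_i = X_k A^k_i : new structure constants of G *)
Definition transf (A : 'M[R]_3) (f : strconst) : strconst :=
  fun i j n => \sum_(k < 3) \sum_(l < 3) \sum_(m < 3)
                 A k i * A l j * f k l m * invmx A n m.

(* dual change of basis X~'^j = (A^-1)^j_k X~^k : new structure constants of G~ *)
Definition transd (A : 'M[R]_3) (ft : strconst) : strconst :=
  fun i j n => \sum_(k < 3) \sum_(l < 3) \sum_(m < 3)
                 invmx A i k * invmx A j l * ft k l m * A m n.

Definition lie_iso (f f' : strconst) : Prop :=
  exists A : 'M[R]_3, A \in unitmx /\ forall i j k, f' i j k = transf A f i j k.

Definition mt_iso (f ft f' ft' : strconst) : Prop :=
  exists A : 'M[R]_3, A \in unitmx /\
    (forall i j k, f' i j k = transf A f i j k) /\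
    (forall i j k, ft' i j k = transd A ft i j k).

Definition bianchiVII (a : R) : strconst :=
  sc_of (vec3 0 (- a) 1) (vec3 0 0 0) (vec3 0 1 a).

Inductive dual_label : Type :=
| L_I
| L_II_i
| L_II_ii
| L_VII of R.

Definition valid_label (l : dual_label) : Prop :=
  match l with L_VII b => b != 0 | _ => True end.

Definition dual_sc (a : R) (l : dual_label) : strconst :=
  match l with
  | L_I => sc_of (vec3 0 0 0) (vec3 0 0 0) (vec3 0 0 0)
  | L_II_i => sc_of (vec3 0 0 0) (vec3 1 0 0) (vec3 0 0 0)
  | L_II_ii => sc_of (vec3 0 0 0) (vec3 (-1) 0 0) (vec3 0 0 0)
  | L_VII b => sc_of (vec3 0 (b * (- a^-1)) b) (vec3 0 0 0) (vec3 0 b (b * a^-1))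
  end.

End Defs.

(* Main.v *)
Require Import Defs.
From HB Require Import structures.
From mathcomp Require Import all_boot all_order all_algebra.
From mathcomp Require Import reals.
From mathcomp Require Import ring lra boolp.
Import Order.TTheory GRing.Theory Num.Theory.
Local Open Scope ring_scope.

Section Gen.
Variable R : comRingType.
Variables (I : finType) (P Q : I -> I -> R) (D : I -> I -> I -> R).
Hypothesis PQ : forall x y, \sum_d P x d * Q d y = (x == y)%:R.

Lemma sum_delta (z : I) (F : I -> R) : \sum_x (x == z)%:R * F x = F z.
Proof.
rewrite (bigD1 z) //= eqxx mul1r big1 ?addr0 // => x /negbTE ->.
by rewrite mul0r.
Qed.

Lemma swap3 (F : I -> I -> I -> R) :
  \sum_x \sum_y \sum_z F x y z = \sum_z \sum_x \sum_y F x y z.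
Proof.
rewrite (eq_bigr (fun x => \sum_z \sum_y F x y z)); last by move=> x _; rewrite exchange_big.
by rewrite exchange_big.
Qed.

Definition Dt a b c := \sum_x \sum_y \sum_z P x a * P y b * D x y z * Q c z.

Lemma Dt_anti : (forall a b c, D a b c = - D b a c) -> forall a b c, Dt a b c = - Dt b a c.
Proof.
move=> H a b c; rewrite /Dt exchange_big -sumrN; apply: eq_bigr => y _.
rewrite -sumrN; apply: eq_bigr => x _; rewrite -sumrN; apply: eq_bigr => z _.
by rewrite H; ring.
Qed.

Definition K x y w z := \sum_d D x y d * D d w z.

Lemma Dt_key a b c e : \sum_d Dt a b d * Dt d c e =
  \sum_x \sum_y \sum_w \sum_z P x a * P y b * P w c * Q e z * K x y w z.
Proof.
pose T z' := \sum_x \sum_y P x a * P y b * D x y z'.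
pose S x'' := \sum_w \sum_z P w c * D x'' w z * Q e z.
have E1 d : Dt a b d = \sum_z' T z' * Q d z'.
  rewrite /Dt swap3; apply: eq_bigr => z _; rewrite /T big_distrl; apply: eq_bigr => x _.
  by rewrite big_distrl.
have E2 d : Dt d c e = \sum_x P x d * S x.
  rewrite /Dt; apply: eq_bigr => x _; rewrite /S big_distrr; apply: eq_bigr => w _.
  rewrite big_distrr; apply: eq_bigr => z _; rewrite /=; ring.
have E3 : \sum_d Dt a b d * Dt d c e = \sum_z T z * S z.
  rewrite (eq_bigr (fun d => \sum_z \sum_x T z * S x * (P x d * Q d z))); last first.
    move=> d _; rewrite E1 E2 big_distrlr; apply: eq_bigr => z _; apply: eq_bigr => x _; rewrite /=; ring.
  rewrite exchange_big; apply: eq_bigr => z _; rewrite exchange_big /=.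
  rewrite (eq_bigr (fun x => (x == z)%:R * (T z * S x))); first by rewrite sum_delta.
  by move=> x _; rewrite -PQ [RHS]big_distrl; apply: eq_bigr => d _ /=; ring.
rewrite E3 /T /S.
rewrite (eq_bigr (fun z => \sum_x \sum_y \sum_w \sum_z' P x a * P y b * P w c * Q e z' * (D x y z * D z w z'))); last first.
  move=> z _; rewrite big_distrl; apply: eq_bigr => x _; rewrite big_distrl; apply: eq_bigr => y _.
  rewrite big_distrr; apply: eq_bigr => w _; rewrite big_distrr; apply: eq_bigr => z' _; rewrite /=; ring.
rewrite exchange_big; apply: eq_bigr => x _.
rewrite exchange_big; apply: eq_bigr => y _.
rewrite exchange_big; apply: eq_bigr => w _.
rewrite exchange_big; apply: eq_bigr => z' _.
by rewrite /K big_distrr.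
Qed.

Definition Jac (E : I -> I -> I -> R) a b c e :=
  \sum_d (E a b d * E d c e + E b c d * E d a e + E c a d * E d b e).

Lemma Dt_jac : (forall a b c e, Jac D a b c e = 0) -> forall a b c e, Jac Dt a b c e = 0.
Proof.
move=> H a b c e; rewrite /Jac !big_split /= !Dt_key.
rewrite [X in _ + X + _]swap3 [X in _ + _ + X]exchange_big.
rewrite [X in _ + _ + X](eq_bigr (fun y => \sum_w \sum_x \sum_z P x c * P y a * P w b * Q e z * K x y w z)); last first.
  by move=> y _; rewrite exchange_big.
rewrite -!big_split /=; apply: big1 => x _.
rewrite -!big_split /=; apply: big1 => y _.
rewrite -!big_split /=; apply: big1 => w _.
rewrite -!big_split /=; apply: big1 => z _.
have HK : K x y w z + K y w x z + K w x y z = 0.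
  by rewrite /K -!big_split; exact: H.
transitivity (P x a * P y b * P w c * Q e z * (K x y w z + K y w x z + K w x y z)).
  by rewrite /=; ring.
by rewrite HK mulr0.
Qed.
End Gen.
Arguments Dt {R I} P Q D a b c.
Arguments Jac {R I} E a b c e.
Arguments Dt_jac {R I} P Q D PQ _ a b c e.
Arguments Dt_anti {R I} P Q D _ a b c.
Lemma Dt_nested (R : comRingType) (I : finType) P Q (D : I -> I -> I -> R) a b c :
  Dt P Q D a b c = \sum_x P x a * \sum_y P y b * \sum_z D x y z * Q c z.
Proof.
rewrite /Dt; apply: eq_bigr => x _; rewrite big_distrr; apply: eq_bigr => y _.
rewrite big_distrr big_distrr; apply: eq_bigr => z _ /=; ring.
Qed.

Section S.
Variable R : realType.

Definition o0 : 'I_3 := @Ordinal 3 0 isT.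
Definition o1 : 'I_3 := @Ordinal 3 1 isT.
Definition o2 : 'I_3 := @Ordinal 3 2 isT.

Lemma sum3 (F : 'I_3 -> R) : \sum_i F i = F o0 + F o1 + F o2.
Proof.
rewrite !big_ord_recl big_ord0 addr0 addrA.
by congr (_ + _ + _); apply: congr1; apply: val_inj.
Qed.

Definition PA (A : 'M[R]_3) (u v : 'I_3 + 'I_3) : R :=
  match u, v with inl k, inl i => A k i | inr k, inr j => invmx A j k | _, _ => 0 end.
Definition QA (A : 'M[R]_3) (u v : 'I_3 + 'I_3) : R :=
  match u, v with inl i, inl k => invmx A i k | inr j, inr k => A k j | _, _ => 0 end.

Lemma sumPl A i (G : 'I_3 + 'I_3 -> R) : \sum_x PA A x (inl i) * G x = \sum_k A k i * G (inl k).
Proof. by rewrite big_sumType /= [X in _ + X]big1 ?addr0 // => k _; rewrite mul0r. Qed.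
Lemma sumPr A i (G : 'I_3 + 'I_3 -> R) : \sum_x PA A x (inr i) * G x = \sum_k invmx A i k * G (inr k).
Proof. by rewrite big_sumType /= [X in X + _]big1 ?add0r // => k _; rewrite mul0r. Qed.
Lemma sumQl A i (G : 'I_3 + 'I_3 -> R) : \sum_x G x * QA A (inl i) x = \sum_k G (inl k) * invmx A i k.
Proof. by rewrite big_sumType /= [X in _ + X]big1 ?addr0 // => k _; rewrite mulr0. Qed.
Lemma sumQr A i (G : 'I_3 + 'I_3 -> R) : \sum_x G x * QA A (inr i) x = \sum_k G (inr k) * A k i.
Proof. by rewrite big_sumType /= [X in X + _]big1 ?add0r // => k _; rewrite mulr0. Qed.

Lemma double_transf (A : 'M[R]_3) f ft a b c :
  double_sc (transf A f) (transd A ft) a b c = Dt (PA A) (QA A) (double_sc f ft) a b c.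
Proof.
rewrite Dt_nested.
case: a => [i|i]; case: b => [j|j]; case: c => [k|k];
  rewrite ?sumPl ?sumPr; under eq_bigr => x _ do rewrite ?sumPl ?sumPr;
  under eq_bigr => x _ do under eq_bigr => y _ do rewrite ?sumQl ?sumQr;
  rewrite /= /transf /transd !sum3 /=; ring.
Qed.
Lemma PQA (A : 'M[R]_3) : A \in unitmx ->
  forall x y, \sum_d PA A x d * QA A d y = (x == y)%:R.
Proof.
move=> uA x y; rewrite big_sumType.
case: x => [k|k]; case: y => [l|l] /=.
- rewrite [X in _ + X]big1 ?addr0; last by move=> i _; rewrite mulr0.
  have := congr1 (fun M : 'M[R]_3 => M k l) (mulmxV uA).
  by rewrite !mxE => <-.
- by rewrite !big1 ?addr0 // => i _; rewrite ?mulr0 ?mul0r.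
- by rewrite !big1 ?addr0 // => i _; rewrite ?mulr0 ?mul0r.
- rewrite [X in X + _]big1 ?add0r; last by move=> i _; rewrite mul0r.
  have := congr1 (fun M : 'M[R]_3 => M l k) (mulmxV uA).
  rewrite !mxE eq_sym => <-; apply: eq_bigr => i _; exact: mulrC.
Qed.

Lemma mt_transfer (A : 'M[R]_3) f ft : A \in unitmx ->
  manin_triple f ft -> manin_triple (transf A f) (transd A ft).
Proof.
move=> uA [Han Hj]; split.
  by move=> a b c; rewrite !double_transf; apply: Dt_anti.
move=> a b c e.
under eq_bigr => d _ do rewrite !double_transf.
have H := Dt_jac (PA A) (QA A) (double_sc f ft) (PQA A uA) Hj a b c e. rewrite /Jac in H. exact H.
Qed.
End S.

Section S3.
Variable R : realType.
Implicit Types (A B : 'M[R]_3) (f g : strconst R).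

Lemma pull3 (F : 'I_3 -> 'I_3 -> 'I_3 -> 'I_3 -> R) :
  \sum_a \sum_d \sum_e \sum_f F a d e f = \sum_d \sum_e \sum_f \sum_a F a d e f.
Proof.
rewrite exchange_big; apply: eq_bigr => d _.
rewrite exchange_big; apply: eq_bigr => e _.
by rewrite exchange_big.
Qed.

Lemma comp6 (a1 a2 a3 : 'I_3 -> R) (b1 b2 b3 : 'I_3 -> 'I_3 -> R) (g : 'I_3 -> 'I_3 -> 'I_3 -> R) :
  \sum_k \sum_l \sum_m a1 k * a2 l * (\sum_k' \sum_l' \sum_m' b1 k' k * b2 l' l * g k' l' m' * b3 m m') * a3 m
  = \sum_k' \sum_l' \sum_m' (\sum_k b1 k' k * a1 k) * (\sum_l b2 l' l * a2 l) * g k' l' m' * (\sum_m a3 m * b3 m m').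
Proof.
pose X k l m k' l' m' := b1 k' k * a1 k * (b2 l' l * a2 l) * g k' l' m' * (a3 m * b3 m m').
transitivity (\sum_k \sum_l \sum_m \sum_k' \sum_l' \sum_m' X k l m k' l' m').
  apply: eq_bigr => k _; apply: eq_bigr => l _; apply: eq_bigr => m _.
  rewrite big_distrr big_distrl /=; apply: eq_bigr => k' _.
  rewrite big_distrr big_distrl /=; apply: eq_bigr => l' _.
  rewrite big_distrr big_distrl /=; apply: eq_bigr => m' _.
  rewrite /X /=; ring.
transitivity (\sum_k' \sum_l' \sum_m' \sum_k \sum_l \sum_m X k l m k' l' m').
  rewrite (eq_bigr (fun k => \sum_l \sum_k' \sum_l' \sum_m' \sum_m X k l m k' l' m')); last first.
    by move=> k _; apply: eq_bigr => l _; rewrite pull3.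
  rewrite (eq_bigr (fun k => \sum_k' \sum_l' \sum_m' \sum_l \sum_m X k l m k' l' m')); last first.
    by move=> k _; rewrite pull3.
  by rewrite pull3.
apply: eq_bigr => k' _; apply: eq_bigr => l' _; apply: eq_bigr => m' _.
rewrite /X !sum3 /=; ring.
Qed.
Lemma invmxM A B : A \in unitmx -> B \in unitmx -> invmx (A *m B) = invmx B *m invmx A.
Proof.
move=> uA uB.
have uAB : A *m B \in unitmx by rewrite unitmx_mul uA uB.
have E : (A *m B) *m (invmx B *m invmx A) = 1%:M.
  by rewrite mulmxA -(mulmxA A) (mulmxV uB) mulmx1 (mulmxV uA).
by rewrite -[LHS]mulmx1 -E mulmxA (mulVmx uAB) mul1mx.
Qed.

Lemma transf_comp A B f i j n : A \in unitmx -> B \in unitmx ->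
  transf B (transf A f) i j n = transf (A *m B) f i j n.
Proof.
move=> uA uB; rewrite {1}/transf.
rewrite (eq_bigr (fun k => \sum_l \sum_m B k i * B l j *
   (\sum_k' \sum_l' \sum_m' A k' k * A l' l * f k' l' m' * invmx A m m') * invmx B n m)) //.
rewrite comp6 /transf invmxM //; apply: eq_bigr => k' _; apply: eq_bigr => l' _; apply: eq_bigr => m' _.
by rewrite !mxE.
Qed.

Lemma transd_comp A B f i j n : A \in unitmx -> B \in unitmx ->
  transd B (transd A f) i j n = transd (A *m B) f i j n.
Proof.
move=> uA uB; rewrite {1}/transd.
rewrite (comp6 (fun k => invmx B i k) (fun l => invmx B j l) (fun m => B m n)
   (fun k' k => invmx A k k') (fun l' l => invmx A l l') (fun m m' => A m' m) f).
rewrite /transd invmxM //; apply: eq_bigr => k' _; apply: eq_bigr => l' _; apply: eq_bigr => m' _.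
rewrite !mxE; congr (_ * _ * _ * _); apply: eq_bigr => x _; exact: mulrC.
Qed.

Lemma ord3P (i : 'I_3) : [\/ i = o0, i = o1 | i = o2].
Proof.
case: i => [[|[|[|m]]] H].
- by apply: Or31; apply: val_inj.
- by apply: Or32; apply: val_inj.
- by apply: Or33; apply: val_inj.
- by [].
Qed.

Lemma transf1 f i j n : transf 1%:M f i j n = f i j n.
Proof.
rewrite /transf invmx1 !sum3 !mxE.
by case: (ord3P i) => ->; case: (ord3P j) => ->; case: (ord3P n) => -> /=; ring.
Qed.

Lemma transd1 f i j n : transd 1%:M f i j n = f i j n.
Proof.
rewrite /transd invmx1 !sum3 !mxE.
by case: (ord3P i) => ->; case: (ord3P j) => ->; case: (ord3P n) => -> /=; ring.
Qed.
Lemma relF A f g : A \in unitmx -> (forall i j n, g i j n = transf A f i j n) ->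
  forall p i j, \sum_n A p n * g i j n = \sum_k \sum_l A k i * A l j * f k l p.
Proof.
move=> uA Hg p i j.
under eq_bigr => n _ do rewrite Hg.
transitivity (\sum_k \sum_l \sum_m A k i * A l j * f k l m * (A *m invmx A) p m).
  rewrite /transf !sum3 !mxE !sum3 /=; ring.
rewrite mulmxV //.
by case: (ord3P p) => ->; rewrite !sum3 !mxE /=; ring.
Qed.

Lemma relD A f g : A \in unitmx -> (forall i j n, g i j n = transd A f i j n) ->
  forall p q n, \sum_i \sum_j A p i * A q j * g i j n = \sum_m f p q m * A m n.
Proof.
move=> uA Hg p q n.
under eq_bigr => i _ do under eq_bigr => j _ do rewrite Hg.
transitivity (\sum_k \sum_l \sum_m (A *m invmx A) p k * (A *m invmx A) q l * f k l m * A m n).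
  rewrite /transd !sum3 !mxE !sum3 /=; ring.
rewrite mulmxV //.
by case: (ord3P p) => ->; case: (ord3P q) => ->; rewrite !sum3 !mxE /=; ring.
Qed.
End S3.

Section S4.
Variable R : realType.

Lemma lin (c x y l r : R) : l = r -> x - y = c * (l - r) -> x = y.
Proof. by move=> -> /eqP; rewrite subrr mulr0 subr_eq0 => /eqP. Qed.

Lemma lin2 (c1 c2 x y l1 r1 l2 r2 : R) : l1 = r1 -> l2 = r2 ->
  x - y = c1 * (l1 - r1) + c2 * (l2 - r2) -> x = y.
Proof. by move=> -> -> /eqP; rewrite !subrr !mulr0 addr0 subr_eq0 => /eqP. Qed.

Lemma colker (M : 'M[R]_3) (v : 'I_3 -> R) : M \in unitmx ->
  (forall i, \sum_k M i k * v k = 0) -> forall k, v k = 0.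
Proof.
move=> uM Hv k.
have H0 : M *m (\col_i v i) = 0.
  apply/matrixP => i j; rewrite !mxE; rewrite -[RHS](Hv i); apply: eq_bigr => l _; by rewrite mxE.
have := congr1 (fun X => (invmx M *m X) k 0) H0.
by rewrite mulKmx // mulmx0 !mxE.
Qed.

Lemma rowker (M : 'M[R]_3) (v : 'I_3 -> R) : M \in unitmx ->
  (forall k, \sum_i v i * M i k = 0) -> forall k, v k = 0.
Proof.
move=> uM Hv k.
have H0 : (\row_i v i) *m M = 0.
  apply/matrixP => i j; rewrite !mxE; rewrite -[RHS](Hv j); apply: eq_bigr => l _; by rewrite mxE.
have := congr1 (fun X => (X *m invmx M) 0 k) H0.
by rewrite mulmxK // mul0mx !mxE.
Qed.

Lemma colker3 (M : 'M[R]_3) v0 v1 v2 : M \in unitmx ->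
  M o0 o0 * v0 + M o0 o1 * v1 + M o0 o2 * v2 = 0 ->
  M o1 o0 * v0 + M o1 o1 * v1 + M o1 o2 * v2 = 0 ->
  M o2 o0 * v0 + M o2 o1 * v1 + M o2 o2 * v2 = 0 -> [/\ v0 = 0, v1 = 0 & v2 = 0].
Proof.
move=> uM h0 h1 h2.
pose v k := if k == o0 then v0 else if k == o1 then v1 else v2.
have H : forall i, \sum_k M i k * v k = 0.
  by move=> i; rewrite sum3; case: (ord3P i) => -> /=; rewrite /v /o0 /o1 /o2 /=.
have := colker M v uM H.
by move=> Hk; split; [exact: (Hk o0) | exact: (Hk o1) | exact: (Hk o2)].
Qed.

Lemma rowker3 (M : 'M[R]_3) v0 v1 v2 : M \in unitmx ->
  v0 * M o0 o0 + v1 * M o1 o0 + v2 * M o2 o0 = 0 ->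
  v0 * M o0 o1 + v1 * M o1 o1 + v2 * M o2 o1 = 0 ->
  v0 * M o0 o2 + v1 * M o1 o2 + v2 * M o2 o2 = 0 -> [/\ v0 = 0, v1 = 0 & v2 = 0].
Proof.
move=> uM h0 h1 h2.
pose v k := if k == o0 then v0 else if k == o1 then v1 else v2.
have H : forall k, \sum_i v i * M i k = 0.
  by move=> k; rewrite sum3; case: (ord3P k) => -> /=; rewrite /v /o0 /o1 /o2 /=.
have := rowker M v uM H.
by move=> Hk; split; [exact: (Hk o0) | exact: (Hk o1) | exact: (Hk o2)].
Qed.

Lemma nz_mul (c x : R) : c != 0 -> c * x = 0 -> x = 0.
Proof. by move=> hc /eqP; rewrite mulf_eq0 (negbTE hc) => /eqP. Qed.

Arguments lin c {x y l r}.
Arguments lin2 c1 c2 {x y l1 r1 l2 r2}.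
Arguments nz_mul {c x}.
Variable a : R.
Hypothesis ha : 0 < a.

Lemma aut_VII (M : 'M[R]_3) : M \in unitmx ->
  (forall i j n, bianchiVII a i j n = transf M (bianchiVII a) i j n) ->
  [/\ M o0 o1 = 0, M o0 o2 = 0, M o0 o0 = 1, M o1 o2 = - M o2 o1 &
      M o2 o2 = M o1 o1 /\ M o1 o1 ^+ 2 + M o2 o1 ^+ 2 != 0].
Proof.
move=> uM HM.
have EF := @relF R M _ _ uM HM.
have := EF o1 o1 o2; have := EF o2 o1 o2.
have := EF o1 o0 o1; have := EF o2 o0 o1.
have := EF o1 o2 o0; have := EF o2 o2 o0.
rewrite !sum3.
have CK := fun v0 v1 v2 => @colker3 M v0 v1 v2 uM.
have RK := fun v0 v1 v2 => @rowker3 M v0 v1 v2 uM.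
move: CK RK.
set m00 := M o0 o0; set m01 := M o0 o1; set m02 := M o0 o2.
set m10 := M o1 o0; set m11 := M o1 o1; set m12 := M o1 o2.
set m20 := M o2 o0; set m21 := M o2 o1; set m22 := M o2 o2.
move=> CK RK.
rewrite /bianchiVII /sc_of /vec3 /o0 /o1 /o2 /= ?(mulr0, mul0r, addr0, add0r, mulr1, mul1r, mulrN, mulNr, oppr0).
move=> e1 e2 e3 e4 e5 e6.
have a2 : 1 + a ^+ 2 != 0 by apply: lt0r_neq0; rewrite ltr_wpDr ?sqr_ge0.
have E1 : m01 * m12 - m11 * m02 = 0.
  apply: (nz_mul a2); by apply: (lin2 (- 1) a e5 e6); ring.
have E2 : m21 * m02 - m01 * m22 = 0.
  apply: (nz_mul a2); by apply: (lin2 (- a) (- 1) e5 e6); ring.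
have [_ H02 H01] : [/\ (0:R) = 0, m02 = 0 & - m01 = 0].
  by apply: (CK 0 m02 (- m01)); [ring | apply: (lin (-1) E1); ring | apply: (lin 1 E2); ring].
have {}H01 : m01 = 0 by rewrite -[m01]opprK H01 oppr0.
rewrite H01 H02 ?(mulr0, mul0r, addr0, add0r, subr0, sub0r, opprK, oppr0) in e1 e2 e3 e4.
have m0nz : m00 != 0.
  apply/eqP => h0.
  have [] := RK 1 0 0; try (rewrite ?H01 ?H02 ?h0; ring).
  by move=> /eqP; rewrite oner_eq0.
have Nnz : m11 ^+ 2 + m21 ^+ 2 != 0.
  apply/eqP => hN.
  have h11 : m11 = 0 by apply/eqP; rewrite -sqrf_eq0; apply/eqP; nra.
  have h21 : m21 = 0 by apply/eqP; rewrite -sqrf_eq0; apply/eqP; nra.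
  have [] := CK 0 1 0; try (rewrite ?H01 ?h11 ?h21; ring).
  by move=> _ /eqP; rewrite oner_eq0.
have H12 : m12 = a * m11 * (1 - m00) - m00 * m21 by apply: (lin 1 e4); ring.
have H22 : m22 = m00 * m11 + a * m21 * (1 - m00) by apply: (lin 1 e3); ring.
rewrite H12 H22 in e1 e2.
pose k := a * (1 - m00).
have hal : (1 + k ^+ 2 - m00 ^+ 2) = 0.
  apply: (nz_mul Nnz); apply: (lin2 m11 m21 e2 e1); rewrite /k; ring.
have hbe : 2 * k * m00 = 0.
  apply: (nz_mul Nnz); apply: (lin2 (- m21) m11 e2 e1); rewrite /k; ring.
have hm0 : m00 = 1.
  move/eqP: hbe; rewrite /k !mulf_eq0 (negbTE m0nz) pnatr_eq0 (gt_eqF ha) /= orbF subr_eq0.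
  by move=> /eqP <-.
split => //.
- by rewrite H12 hm0; ring.
- by split => //; rewrite H22 hm0; ring.

Qed.
Definition bv (l : dual_label R) : R := match l with L_VII b => b | _ => 0 end.
Definition ev (l : dual_label R) : R :=
  match l with L_II_i => 1 | L_II_ii => -1 | _ => 0 end.

Lemma dual_sc_form l i j n : dual_sc a l i j n =
  sc_of (vec3 0 (- bv l / a) (bv l)) (vec3 (ev l) 0 0) (vec3 0 (bv l) (bv l / a)) i j n.
Proof.
by case: l => [|||b]; case: (ord3P i) => ->; case: (ord3P j) => ->; case: (ord3P n) => ->;
  rewrite /dual_sc /sc_of /vec3 /o0 /o1 /o2 /bv /ev /=; ring.
Qed.

Lemma label_unique (M : 'M[R]_3) l1 l2 : M \in unitmx ->
  valid_label l1 -> valid_label l2 ->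
  (forall i j n, bianchiVII a i j n = transf M (bianchiVII a) i j n) ->
  (forall i j n, dual_sc a l2 i j n = transd M (dual_sc a l1) i j n) -> l2 = l1.
Proof.
move=> uM v1 v2 HM HD.
have [h01 h02 h00 h12 [h22 Nnz]] := aut_VII M uM HM.
have ED := @relD R M _ _ uM HD.
have := ED o0 o1 o1; have := ED o0 o1 o2; have := ED o1 o2 o0.
rewrite !sum3 !dual_sc_form h01 h02 h00 h12 h22.
have Npos : 0 < M o1 o1 ^+ 2 + M o2 o1 ^+ 2.
  by rewrite lt0r Nnz addr_ge0 ?sqr_ge0.
move: Nnz Npos.
set u1 := M o1 o1; set u2 := M o2 o1; set m10 := M o1 o0; set m20 := M o2 o0.
move=> Nnz Npos.
rewrite /sc_of /vec3 /o0 /o1 /o2 /=.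
set b1 := bv l1; set b2 := bv l2; set e1 := ev l1; set e2 := ev l2.
move=> eE eB eA.
have anz : a != 0 by rewrite gt_eqF.
have a2 : (1 + a ^+ 2) * (u1 ^+ 2 + u2 ^+ 2) != 0.
  by rewrite mulf_neq0 // lt0r_neq0 // ltr_wpDr ?sqr_ge0.
have hb : b2 = b1.
  apply/eqP; rewrite -subr_eq0; apply/eqP; apply: (nz_mul a2).
  apply: (lin2 (a ^+ 2 * (u2 - u1 / a)) (a ^+ 2 * (u1 + u2 / a)) eA eB).
  by field.
have he : e2 * (u1 ^+ 2 + u2 ^+ 2) = e1 by apply: (lin 1 eE); ring.
move: hb he v1 v2 Npos; rewrite /b1 /b2 /e1 /e2; clear -ha.
case: l1 => [|||c1]; case: l2 => [|||c2] //= => hb he v1 v2 Np;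
  rewrite ?hb //; try (by rewrite hb eqxx in v2); try (by rewrite -hb eqxx in v1); exfalso; lra.
Qed.
End S4.
Arguments lin {R} c {x y l r}.
Arguments lin2 {R} c1 c2 {x y l1 r1 l2 r2}.
Arguments nz_mul {R c x}.
Arguments bv {R}.
Arguments ev {R}.

Section S5.
Variable R : realType.
Variable a : R.
Hypothesis ha : 0 < a.

Lemma ft_form (f ft : strconst R) : manin_triple f ft ->
  ft = sc_of (vec3 (ft o0 o1 o0) (ft o0 o1 o1) (ft o0 o1 o2))
             (vec3 (ft o1 o2 o0) (ft o1 o2 o1) (ft o1 o2 o2))
             (vec3 (ft o2 o0 o0) (ft o2 o0 o1) (ft o2 o0 o2)).
Proof.
move=> [Han _].
have As i j k : ft i j k = - ft j i k by exact: (Han (inr i) (inr j) (inr k)).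
have Z i k : ft i i k = 0.
  have : ft i i k *+ 2 = 0 by rewrite mulr2n {1}As addNr.
  by move/eqP; rewrite mulrn_eq0 /= => /eqP.
apply: funext => i; apply: funext => j; apply: funext => k.
case: (ord3P i) => ->; case: (ord3P j) => ->; case: (ord3P k) => ->;
  rewrite ?Z /sc_of /vec3 /o0 /o1 /o2 /=; try done.
Qed.
Definition mx3 (m00 m01 m02 m10 m11 m12 m20 m21 m22 : R) : 'M[R]_3 :=
  \matrix_(i < 3, j < 3) nth 0 (nth [::] [:: [:: m00; m01; m02]; [:: m10; m11; m12];
                                           [:: m20; m21; m22]] i) j.

Lemma inv_of (P Q : 'M[R]_3) : P *m Q = 1%:M -> P \in unitmx /\ invmx P = Q.
Proof.
move=> PQ.
have uP : P \in unitmx by case/mulmx1_unit: PQ.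
split => //.
by rewrite -[LHS]mulmx1 -PQ mulmxA mulVmx // mul1mx.
Qed.

Lemma jac_eqs x0 x1 x2 x3 x4 x5 x6 x7 x8 :
  manin_triple (bianchiVII a) (sc_of (vec3 x0 x1 x2) (vec3 x3 x4 x5) (vec3 x6 x7 x8)) ->
  [/\ x7 = x2, x8 = - x1, x2 = - a * x1,
      x0 + x5 + a * x4 - a * x6 = 0 &
      [/\ - a * x0 - x4 - x6 + a * x5 = 0 & x0 * x4 - x5 * x6 - 2 * x1 * x3 = 0]].
Proof.
move=> [_ HJ].
have := HJ (inl o0) (inl o1) (inr o0) (inl o1).
have := HJ (inl o0) (inl o1) (inr o0) (inl o2).
have := HJ (inl o0) (inl o1) (inr o1) (inl o2).
have := HJ (inl o0) (inl o2) (inr o1) (inl o2).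
have := HJ (inl o0) (inr o0) (inr o1) (inl o2).
have := HJ (inl o1) (inl o2) (inr o1) (inl o2).
rewrite !big_sumType !sum3 /= /bianchiVII /sc_of /vec3 /o0 /o1 /o2 /= ?(mulr0, mul0r, addr0, add0r, mulr1, mul1r, mulrN, mulNr, oppr0, opprK).
move=> j6 j5 j4 j3 j2 j1.
have h7 : x7 = x2 by apply: (lin (-1) j1); ring.
have h8 : x8 = - x1 by apply: (lin (-1) j2); ring.
rewrite h7 h8 in j6 j5.
have h2 : x2 = - a * x1.
  have t : 2 * (x2 + a * x1) = 0 by apply: (lin (-1) j6); ring.
  have two : (2:R) != 0 by rewrite pnatr_eq0.
  by apply: (lin 1 (nz_mul two t)); ring.
split; [exact: h7 | exact: h8 | by rewrite h2; ring | by apply: (lin 1 j3); ring | ].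
split; first by apply: (lin 1 j4); ring.
by apply: (lin 1 j5); ring.
Qed.
Definition scx x0 x1 x2 x3 x4 x5 x6 x7 x8 : strconst R :=
  sc_of (vec3 x0 x1 x2) (vec3 x3 x4 x5) (vec3 x6 x7 x8).

Lemma diagP (t : R) : t != 0 ->
  [/\ mx3 1 0 0 0 t^-1 0 0 0 t^-1 \in unitmx,
      invmx (mx3 1 0 0 0 t^-1 0 0 0 t^-1) = mx3 1 0 0 0 t 0 0 0 t &
      forall i j n, bianchiVII a i j n = transf (mx3 1 0 0 0 t^-1 0 0 0 t^-1) (bianchiVII a) i j n].
Proof.
move=> tnz.
have [uP iP] := @inv_of (mx3 1 0 0 0 t^-1 0 0 0 t^-1) (mx3 1 0 0 0 t 0 0 0 t)
  (ltac:(apply/matrixP => i j; rewrite !mxE sum3 !mxE;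
     case: (ord3P i) => ->; case: (ord3P j) => ->; rewrite /o0 /o1 /o2 /=; field; try done)).
split => // i j n; rewrite /transf iP !sum3 !mxE.
case: (ord3P i) => ->; case: (ord3P j) => ->; case: (ord3P n) => ->;
  rewrite /bianchiVII /sc_of /vec3 /o0 /o1 /o2 /=; field; try done.
Qed.

Lemma shearP (v2 v3 : R) :
  [/\ mx3 1 0 0 (- v2) 1 0 (- v3) 0 1 \in unitmx,
      invmx (mx3 1 0 0 (- v2) 1 0 (- v3) 0 1) = mx3 1 0 0 v2 1 0 v3 0 1 &
      forall i j n, bianchiVII a i j n = transf (mx3 1 0 0 (- v2) 1 0 (- v3) 0 1) (bianchiVII a) i j n].
Proof.
have [uP iP] := @inv_of (mx3 1 0 0 (- v2) 1 0 (- v3) 0 1) (mx3 1 0 0 v2 1 0 v3 0 1)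
  (ltac:(apply/matrixP => i j; rewrite !mxE sum3 !mxE;
         case: (ord3P i) => ->; case: (ord3P j) => ->; rewrite /o0 /o1 /o2 /=; ring)).
split => // i j n; rewrite /transf iP !sum3 !mxE.
case: (ord3P i) => ->; case: (ord3P j) => ->; case: (ord3P n) => ->;
  rewrite /bianchiVII /sc_of /vec3 /o0 /o1 /o2 /=; ring.
Qed.

Lemma diag_dual (t e : R) (l : dual_label R) : t != 0 -> bv l = 0 -> ev l = e ->
  forall i j n, scx 0 0 0 (e * t ^+ 2) 0 0 0 0 0 i j n =
    transd (mx3 1 0 0 0 t^-1 0 0 0 t^-1) (dual_sc a l) i j n.
Proof.
move=> tnz hb he i j n.
have [_ iP _] := diagP t tnz.
rewrite /transd iP !sum3 !mxE !dual_sc_form hb he.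
case: (ord3P i) => ->; case: (ord3P j) => ->; case: (ord3P n) => ->;
  rewrite /scx /sc_of /vec3 /o0 /o1 /o2 /=; ring.
Qed.

Lemma classify_x x0 x1 x2 x3 x4 x5 x6 x7 x8 :
  manin_triple (bianchiVII a) (scx x0 x1 x2 x3 x4 x5 x6 x7 x8) ->
  exists l (P : 'M[R]_3), [/\ valid_label l, P \in unitmx,
    (forall i j n, bianchiVII a i j n = transf P (bianchiVII a) i j n) &
    (forall i j n, scx x0 x1 x2 x3 x4 x5 x6 x7 x8 i j n = transd P (dual_sc a l) i j n)].
Proof.
move=> /jac_eqs [h7 h8 h2 L3 [L4 Q]].
have anz : a != 0 by rewrite gt_eqF.
have a2 : 1 + a ^+ 2 != 0 by apply: lt0r_neq0; rewrite ltr_wpDr ?sqr_ge0.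
have h4' : (1 + a ^+ 2) * x4 = - (2 * a * x0) + (a ^+ 2 - 1) * x6.
  by apply: (lin2 a (-1) L3 L4); ring.
have h5' : (1 + a ^+ 2) * x5 = (a ^+ 2 - 1) * x0 + 2 * a * x6.
  by apply: (lin2 1 a L3 L4); ring.
have h4 : x4 = (- (2 * a * x0) + (a ^+ 2 - 1) * x6) / (1 + a ^+ 2).
  by apply: (mulfI a2); rewrite h4'; field.
have h5 : x5 = ((a ^+ 2 - 1) * x0 + 2 * a * x6) / (1 + a ^+ 2).
  by apply: (mulfI a2); rewrite h5'; field.
clear h4' h5' L3 L4.
have [x1z|x1nz] := eqVneq x1 0.
  have hsq : x0 ^+ 2 + x6 ^+ 2 = 0.
    have t : (2 * a) * (x0 ^+ 2 + x6 ^+ 2) = 0.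
      have Q' : (1 + a ^+ 2) * (x0 * x4 - x5 * x6) = 0.
        by rewrite x1z in Q; rewrite -[RHS](mulr0 (1 + a ^+ 2)) -Q; ring.
      rewrite -[RHS]oppr0 -Q' h4 h5; field; first done.
    by apply: (nz_mul _ t); rewrite mulf_neq0 // pnatr_eq0.
  have x0z : x0 = 0 by apply/eqP; rewrite -sqrf_eq0; apply/eqP; nra.
  have x6z : x6 = 0 by apply/eqP; rewrite -sqrf_eq0; apply/eqP; nra.
  rewrite x0z x6z !(mulr0, oppr0, add0r, mul0r) in h4 h5.
  rewrite x1z mulr0 oppr0 in h8 h2; rewrite h2 in h7.
  subst x0 x1 x2 x4 x5 x6 x7 x8.
  have [x3n|x3p|x3z] := ltrgtP x3 0.
  - have [t tp hx3] : exists2 t : R, 0 < t & x3 = - 1 * t ^+ 2.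
      by exists (Num.sqrt (- x3)); rewrite ?sqrtr_gt0 ?oppr_gt0 // sqr_sqrtr ?mulN1r ?opprK // oppr_ge0 ltW.
    have tnz : t != 0 by rewrite gt_eqF.
    have [uP _ HP] := diagP t tnz.
    exists (L_II_ii R), (mx3 1 0 0 0 t^-1 0 0 0 t^-1); split => //.
    by rewrite hx3; apply: diag_dual.
  - have [t tp hx3] : exists2 t : R, 0 < t & x3 = 1 * t ^+ 2.
      by exists (Num.sqrt x3); rewrite ?sqrtr_gt0 // mul1r sqr_sqrtr // ltW.
    have tnz : t != 0 by rewrite gt_eqF.
    have [uP _ HP] := diagP t tnz.
    exists (L_II_i R), (mx3 1 0 0 0 t^-1 0 0 0 t^-1); split => //.
    by rewrite hx3; apply: diag_dual.
  - exists (L_I R), 1%:M; split => //; first exact: unitmx1.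
    + by move=> i j n; rewrite transf1.
    + move=> i j n; rewrite transd1 x3z.
      by case: (ord3P i) => ->; case: (ord3P j) => ->; case: (ord3P n) => ->.
have h3 : x3 = (x0 * x4 - x5 * x6) / (2 * x1).
  have t2 : (2 : R) * x1 != 0 by rewrite mulf_neq0 // pnatr_eq0.
  apply: (mulfI t2); rewrite [RHS]mulrC divfK //; apply: (lin (-1) Q); ring.
have a2x : x1 * (1 + a ^+ 2) != 0 by rewrite mulf_neq0.
pose v2 := (a * x6 - x0) / (x1 * (1 + a ^+ 2)).
pose v3 := (a * x0 + x6) / (x1 * (1 + a ^+ 2)).
have e0 : x0 = x1 * (- v2 + a * v3) by rewrite /v2 /v3; field; rewrite ?x1nz ?a2.
have e6 : x6 = x1 * (a * v2 + v3) by rewrite /v2 /v3; field; rewrite ?x1nz ?a2.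
have e4 : x4 = x1 * (- v3 + a * v2) by rewrite h4 /v2 /v3; field; rewrite ?x1nz ?a2.
have e5 : x5 = x1 * (a * v3 + v2) by rewrite h5 /v2 /v3; field; rewrite ?x1nz ?a2.
have e3 : x3 = - a * x1 * (v2 ^+ 2 + v3 ^+ 2).
  by rewrite h3 e4 e5 e0 e6; field; rewrite ?x1nz.
have [uP iP HP] := shearP v2 v3.
exists (L_VII (- a * x1)), (mx3 1 0 0 (- v2) 1 0 (- v3) 0 1); split => //.
- by rewrite /= mulf_neq0 // oppr_eq0.
move=> i j n; rewrite /transd iP !sum3 !mxE.
clearbody v2 v3; clear h3 h4 h5 Q.
subst x3 x4 x5 x0 x6 x7 x2 x8.
case: (ord3P i) => ->; case: (ord3P j) => ->; case: (ord3P n) => ->;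
  rewrite /scx /dual_sc /sc_of /vec3 /o0 /o1 /o2 /=; field; try done.
Qed.
End S5.

Section S6.
Variable R : realType.
Implicit Types (A B : 'M[R]_3) (f g : strconst R).

Lemma fext f g : (forall i j n, f i j n = g i j n) -> f = g.
Proof. by move=> H; apply: funext => i; apply: funext => j; apply: funext => n. Qed.

Lemma transfC A B f : A \in unitmx -> B \in unitmx -> transf B (transf A f) = transf (A *m B) f.
Proof. by move=> uA uB; apply: fext => i j n; apply: transf_comp. Qed.
Lemma transdC A B f : A \in unitmx -> B \in unitmx -> transd B (transd A f) = transd (A *m B) f.
Proof. by move=> uA uB; apply: fext => i j n; apply: transd_comp. Qed.
Lemma transf1F f : transf 1%:M f = f.
Proof. by apply: fext => i j n; apply: transf1. Qed.
Lemma transd1F f : transd 1%:M f = f.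
Proof. by apply: fext => i j n; apply: transd1. Qed.

Lemma undo A f g : A \in unitmx -> f = transf A g -> transf (invmx A) f = g.
Proof.
by move=> uA ->; rewrite transfC ?unitmx_inv // mulmxV // transf1F.
Qed.
Lemma undod A f g : A \in unitmx -> f = transd A g -> transd (invmx A) f = g.
Proof.
by move=> uA ->; rewrite transdC ?unitmx_inv // mulmxV // transd1F.
Qed.
End S6.
Arguments undo {R A f g}.
Arguments undod {R A f g}.

Theorem mainTheorem3 (R : realType) (a : R) (ha : 0 < a)
    (f' ft' : strconst R) :
  manin_triple f' ft' ->
  lie_iso (bianchiVII a) f' ->
  exists l : dual_label R,
    valid_label l /\ mt_iso (bianchiVII a) (dual_sc a l) f' ft' /\
    (forall l' : dual_label R,
       valid_label l' -> mt_iso (bianchiVII a) (dual_sc a l') f' ft' -> l' = l).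
Proof.
move=> MT [A0 [uA0 HA0]].
have EA0 : f' = transf A0 (bianchiVII a) by apply: fext.
have uC0 : invmx A0 \in unitmx by rewrite unitmx_inv.
have MT0 := mt_transfer _ _ _ _ uC0 MT.
rewrite (undo uA0 EA0) in MT0.
set ft0 := transd (invmx A0) ft' in MT0.
have Eft : ft' = transd A0 ft0.
  by rewrite /ft0 transdC // mulVmx // transd1F.
have := ft_form _ _ _ MT0.
move: MT0; set ft1 := sc_of _ _ _ => MT0 Eft0.
rewrite Eft0 in MT0.
have [l [P [vl uP HP HD]]] := classify_x _ _ ha _ _ _ _ _ _ _ _ _ MT0.
have EP : bianchiVII a = transf P (bianchiVII a) by apply: fext.
have ED : ft0 = transd P (dual_sc a l) by rewrite Eft0; apply: fext.
have uPA : P *m A0 \in unitmx by rewrite unitmx_mul uP.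
exists l; split => //; split.
  exists (P *m A0); split => //; split => i j n.
  - by rewrite EA0 {1}EP transfC.
  - by rewrite Eft ED transdC.
move=> l' vl' [A2 [uA2 [HF2 HD2]]].
have EF2 : f' = transf A2 (bianchiVII a) by apply: fext.
have ED2 : ft' = transd A2 (dual_sc a l') by apply: fext.
have E1 : f' = transf (P *m A0) (bianchiVII a) by rewrite EA0 {1}EP transfC.
have E2 : ft' = transd (P *m A0) (dual_sc a l) by rewrite Eft ED transdC.
have uI2 : invmx A2 \in unitmx by rewrite unitmx_inv.
apply: (@label_unique R a ha (P *m A0 *m invmx A2) l l').
- by rewrite unitmx_mul uPA.
- exact: vl.
- exact: vl'.
- move=> i j n; rewrite -transfC // -E1 (undo uA2 EF2) //.
- move=> i j n; rewrite -transdC // -E2 (undod uA2 ED2) //.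
Qed.
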